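(* There is an absolute constant $c>0$ such that for every $m$ there is an instance with two additive buyers and $m$ identical items (each buyer has the same value for all items) such that, for every selling order, there is a tie-breaking rule and a pure subgame perfect equilibrium of the resulting sequential first-price auction whose social welfare is at most $\mathrm{OPT}/(cm)$, where $\mathrm{OPT}$ is the maximum possible social welfare. In other words, the price of anarchy for additive buyers is $\Omega(m)$, even for identical items and for any selling order.
   Context: Setting (sequential first-price auctions): there is a set $M$ of $m$ items and a set $N$ of buyers. A buyer $i$ is additive if there are $v_{i,j}\ge 0$ with $v_i(S)=\sum_{j\in S}v_{i,j}$; utilities are quasi-linear. Items are sold one at a time; each item is sold by a sealed-bid first-price auction without reserve price: every buyer submits a nonnegative bid, a highest bidder wins (ties broken by a tie-breaking rule fixed by the seller) and pays his bid. The seller fixes the selling order (possibly as a function of the allocation of previously sold items) and the tie-breaking rule. There is full information. A pure subgame perfect equilibrium is a profile of pure strategies (a bid for each buyer at each node of the game tree) that is a Nash equilibrium in every subgame. Social welfare is the sum of the buyers' values for their bundles; the price of anarchy is the ratio of the maximum social welfare to the worst social welfare of an equilibrium. *)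

(* Defs.v *)
From Stdlib Require Import Reals Lra List.
Import ListNotations.
Open Scope R_scope.

Inductive buyer := B1 | B2.

Definition buyer_eqb (i j : buyer) : bool :=
  match i, j with B1, B1 | B2, B2 => true | _, _ => false end.

(** A bid history (node of the game tree): the list of bid profiles
    (bid of B1, bid of B2) submitted in the auctions already run. *)
Definition history := list (R * R).

Definition strategy := history -> R.
Definition profile := buyer -> strategy.

(** Allocation history: list of (item sold, winner) of previous auctions. *)
Definition alloc_history := list (nat * buyer).

(** Selling order: next item, as a function of the allocation so far. *)
Definition selling_order := alloc_history -> nat.

Definition valid_order (m : nat) (ord : selling_order) : Prop :=
  forall acc : alloc_history, (length acc < m)%nat ->
    (ord acc < m)%nat /\ ~ In (ord acc) (map fst acc).

Definition tie_rule := alloc_history -> buyer.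

Definition winner (tb : tie_rule) (acc : alloc_history) (b1 b2 : R) : buyer :=
  if Rlt_dec b2 b1 then B1 else if Rlt_dec b1 b2 then B2 else tb acc.

Definition bid_of (i : buyer) (b1 b2 : R) : R :=
  match i with B1 => b1 | B2 => b2 end.

(** Outcome of a full bid history: list of (item, winner, price paid). *)
Fixpoint outcome_aux (ord : selling_order) (tb : tie_rule)
    (acc : alloc_history) (bids : history) : list (nat * buyer * R) :=
  match bids with
  | [] => []
  | (b1, b2) :: rest =>
      let w := winner tb acc b1 b2 in
      let j := ord acc in
      (j, w, bid_of w b1 b2) :: outcome_aux ord tb (acc ++ [(j, w)]) rest
  end.

Definition outcome ord tb (bids : history) := outcome_aux ord tb [] bids.

Fixpoint play (s : profile) (n : nat) (h : history) : history :=
  match n with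
  | O => h
  | S n' => play s n' (h ++ [(s B1 h, s B2 h)])
  end.

Definition final (m : nat) (s : profile) (h : history) : history :=
  play s (m - length h) h.

(** Identical items: v i is buyer i's value for each single item;
    additive valuation, quasi-linear utility. *)
Definition utility (v : buyer -> R) (i : buyer) (out : list (nat * buyer * R)) : R :=
  fold_right (fun '(_, w, p) acc =>
                (if buyer_eqb w i then v i - p else 0) + acc) 0 out.

Definition social_welfare (v : buyer -> R) (out : list (nat * buyer * R)) : R :=
  fold_right (fun '(_, w, _) acc => v w + acc) 0 out.

Definition deviate (s : profile) (i : buyer) (s' : strategy) : profile :=
  fun j => if buyer_eqb j i then s' else s j.

Definition nonneg_strategy (s : strategy) : Prop := forall h, 0 <= s h.

Definition nonneg_history (h : history) : Prop :=
  forall b, In b h -> 0 <= fst b /\ 0 <= snd b.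

(** Pure subgame perfect equilibrium: a Nash equilibrium in every subgame,
    i.e. at every (nonterminal) node reachable with nonnegative bids. *)
Definition is_SPE (m : nat) (ord : selling_order) (tb : tie_rule)
    (v : buyer -> R) (s : profile) : Prop :=
  (forall i, nonneg_strategy (s i)) /\
  forall h : history, nonneg_history h -> (length h < m)%nat ->
  forall (i : buyer) (s' : strategy), nonneg_strategy s' ->
    utility v i (outcome ord tb (final m (deviate s i s') h))
      <= utility v i (outcome ord tb (final m s h)).

Definition eq_welfare m ord tb v (s : profile) : R :=
  social_welfare v (outcome ord tb (final m s [])).

(** Welfare of an allocation (item j goes to a j) of items 0..m-1. *)
Fixpoint sumR (f : nat -> R) (n : nat) : R :=
  match n with O => 0 | S n' => sumR f n' + f n' end.

Definition alloc_welfare (m : nat) (v : buyer -> R) (a : nat -> buyer) : R :=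
  sumR (fun j => v (a j)) m.

Definition is_OPT (m : nat) (v : buyer -> R) (opt : R) : Prop :=
  (exists a, alloc_welfare m v a = opt) /\
  (forall a, alloc_welfare m v a <= opt).

(* Main.v *)
From Stdlib Require Import Reals List Lra Lia Bool.
Require Import Defs.
Import ListNotations.
Open Scope R_scope.

Definition alloc_of (out : list (nat * buyer * R)) : alloc_history :=
  map (fun x => (fst (fst x), snd (fst x))) out.

Lemma outcome_aux_snoc ord tb : forall h acc b1 b2,
  outcome_aux ord tb acc (h ++ [(b1, b2)]) =
  outcome_aux ord tb acc h ++
   [let acc' := acc ++ alloc_of (outcome_aux ord tb acc h) in
    let w := winner tb acc' b1 b2 in (ord acc', w, bid_of w b1 b2)].
Proof.
  induction h as [|[x1 x2] h IH]; intros acc b1 b2; simpl.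
  - rewrite app_nil_r. reflexivity.
  - rewrite IH. simpl. rewrite <- app_assoc. reflexivity.
Qed.

Definition A ord tb h := alloc_of (outcome ord tb h).

Lemma outcome_snoc ord tb h b1 b2 :
  outcome ord tb (h ++ [(b1, b2)]) =
  outcome ord tb h ++
   [(ord (A ord tb h), winner tb (A ord tb h) b1 b2,
     bid_of (winner tb (A ord tb h) b1 b2) b1 b2)].
Proof. unfold outcome, A. rewrite outcome_aux_snoc. reflexivity. Qed.

Lemma A_snoc ord tb h b1 b2 :
  A ord tb (h ++ [(b1, b2)]) =
  A ord tb h ++ [(ord (A ord tb h), winner tb (A ord tb h) b1 b2)].
Proof. unfold A at 1. rewrite outcome_snoc. unfold alloc_of. rewrite map_app. reflexivity. Qed.

Lemma outcome_aux_length ord tb : forall h acc, length (outcome_aux ord tb acc h) = length h.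
Proof. induction h as [|[x1 x2] h IH]; intros acc; simpl; auto. Qed.

Lemma A_length ord tb h : length (A ord tb h) = length h.
Proof. unfold A, alloc_of, outcome. rewrite length_map, outcome_aux_length. reflexivity. Qed.

Lemma utility_app v i l1 l2 : utility v i (l1 ++ l2) = utility v i l1 + utility v i l2.
Proof. induction l1 as [|[[j w] p] l IH]; simpl. lra. rewrite IH. lra. Qed.

Lemma welfare_app v l1 l2 : social_welfare v (l1 ++ l2) = social_welfare v l1 + social_welfare v l2.
Proof. induction l1 as [|[[j w] p] l IH]; simpl. lra. rewrite IH. lra. Qed.

Definition pun (acc : alloc_history) : bool := existsb (fun x => buyer_eqb (snd x) B1) acc.

Lemma pun_snoc acc j w : pun (acc ++ [(j, w)]) = pun acc || buyer_eqb w B1.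
Proof. unfold pun. rewrite existsb_app. simpl. rewrite orb_false_r. reflexivity. Qed.

Definition tbm (m : nat) (acc : alloc_history) : buyer :=
  if pun acc || Nat.eqb (length acc) (m - 1) then B1 else B2.

Definition vv (i : buyer) : R := match i with B1 => 1 | B2 => 0 end.

Definition strat m ord : strategy := fun h => if pun (A ord (tbm m) h) then 1 else 0.
Definition sprof m ord : profile := fun _ => strat m ord.

Definition V m ord (n : nat) (h : history) : R :=
  match n with O => 0 | S _ => if pun (A ord (tbm m) h) then 0 else 1 end.

Lemma V_le1 m ord n h : V m ord n h <= 1.
Proof. unfold V. destruct n; [lra|]. destruct pun; lra. Qed.

Lemma V_pun m ord n h : pun (A ord (tbm m) h) = true -> V m ord n h = 0.
Proof. intros H. unfold V. destruct n; auto. rewrite H. auto. Qed.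

Lemma win_pun m acc b1 b2 : pun acc = true ->
  winner (tbm m) acc b1 b2 = if Rlt_dec b1 b2 then B2 else B1.
Proof.
  intros H. unfold winner, tbm. rewrite H. simpl.
  destruct (Rlt_dec b2 b1); destruct (Rlt_dec b1 b2); auto; lra.
Qed.

Lemma win_00 m acc : pun acc = false ->
  winner (tbm m) acc 0 0 = if Nat.eqb (length acc) (m - 1) then B1 else B2.
Proof.
  intros H. unfold winner, tbm. rewrite H. simpl.
  destruct (Rlt_dec 0 0); [lra|]. reflexivity.
Qed.

Lemma win_pos m acc b : 0 < b -> winner (tbm m) acc b 0 = B1.
Proof. intros H. unfold winner. destruct (Rlt_dec 0 b); auto; lra. Qed.

Section S.
Variable m : nat.
Variable ord : selling_order.
Notation tb := (tbm m).
Notation U i out := (utility vv i out).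

Lemma dev1 (p : profile) :
  (forall h, p B2 h = strat m ord h) -> (forall h, 0 <= p B1 h) ->
  forall n h, (length h + n = m)%nat ->
  U B1 (outcome ord tb (play p n h)) <= U B1 (outcome ord tb h) + V m ord n h.
Proof.
  intros HB2 HB1. induction n as [|n IH]; intros h Hl.
  - simpl. lra.
  - simpl play. eapply Rle_trans. apply IH. rewrite length_app; simpl; lia.
    rewrite outcome_snoc, utility_app, HB2.
    assert (Hb := HB1 h). set (b := p B1 h) in *.
    unfold strat. simpl V.
    destruct (pun (A ord tb h)) eqn:Hp.
    + rewrite V_pun. 2:{ rewrite A_snoc, pun_snoc, Hp. reflexivity. }
      rewrite (win_pun m _ _ _ Hp).
      destruct (Rlt_dec b 1); simpl; lra.
    + pose proof (V_le1 m ord n (h ++ [(b, 0)])).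
      destruct (Rlt_dec 0 b) as [Hb0|Hb0].
      * rewrite (win_pos m _ _ Hb0). simpl.
        rewrite V_pun. lra. rewrite A_snoc, pun_snoc, (win_pos m _ _ Hb0).
        simpl. apply orb_true_r.
      * assert (b = 0) by lra. rewrite H0 in *.
        rewrite (win_00 m _ Hp).
        destruct (Nat.eqb (length (A ord tb h)) (m - 1)) eqn:E.
        -- apply Nat.eqb_eq in E. rewrite A_length in E.
           assert (n = 0%nat) by lia. subst n. simpl. lra.
        -- simpl. lra.
Qed.

Lemma eq1 : forall n h, (length h + n = m)%nat ->
  U B1 (outcome ord tb (play (sprof m ord) n h)) = U B1 (outcome ord tb h) + V m ord n h.
Proof.
  induction n as [|n IH]; intros h Hl.
  - simpl. lra.
  - simpl play. rewrite IH. 2:{ rewrite length_app; simpl; lia. }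
    rewrite outcome_snoc, utility_app. unfold sprof, strat. simpl V.
    destruct (pun (A ord tb h)) eqn:Hp.
    + rewrite V_pun. 2:{ rewrite A_snoc, pun_snoc, Hp. reflexivity. }
      rewrite (win_pun m _ _ _ Hp). destruct (Rlt_dec 1 1); [lra|]. simpl. lra.
    + rewrite (win_00 m _ Hp).
      destruct (Nat.eqb (length (A ord tb h)) (m - 1)) eqn:E.
      * apply Nat.eqb_eq in E. rewrite A_length in E.
        assert (n = 0%nat) by lia. subst n. simpl. lra.
      * apply Nat.eqb_neq in E. rewrite A_length in E.
        destruct n as [|n]; [lia|]. simpl V.
        rewrite A_snoc, pun_snoc, Hp, (win_00 m _ Hp).
        assert (Nat.eqb (length (A ord tb h)) (m - 1) = false) as E'
          by (apply Nat.eqb_neq; rewrite A_length; auto).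
        rewrite E'. simpl. lra.
Qed.

Lemma welf : forall n h, (length h + n = m)%nat -> pun (A ord tb h) = false ->
  social_welfare vv (outcome ord tb (play (sprof m ord) n h)) =
  social_welfare vv (outcome ord tb h) + V m ord n h.
Proof.
  induction n as [|n IH]; intros h Hl Hp.
  - simpl. lra.
  - simpl play.
    assert (Hs: forall i, sprof m ord i h = 0) by (intros; unfold sprof, strat; rewrite Hp; auto).
    rewrite !Hs.
    pose proof (win_00 m _ Hp) as Hw.
    simpl V. rewrite Hp.
    destruct (Nat.eqb (length (A ord tb h)) (m - 1)) eqn:E.
    + apply Nat.eqb_eq in E. rewrite A_length in E.
      assert (n = 0%nat) by lia. subst n. simpl play.
      rewrite outcome_snoc, welfare_app, Hw. simpl. lra.
    + apply Nat.eqb_neq in E. rewrite A_length in E.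
      rewrite IH. 2:{ rewrite length_app; simpl; lia. }
      2:{ rewrite A_snoc, pun_snoc, Hp, Hw. reflexivity. }
      rewrite outcome_snoc, welfare_app, Hw.
      destruct n as [|n]; [lia|]. simpl V.
      rewrite A_snoc, pun_snoc, Hp, Hw. simpl. lra.
Qed.

Lemma dev2 (p : profile) : (forall h, 0 <= p B2 h) ->
  forall n h, U B2 (outcome ord tb (play p n h)) <= U B2 (outcome ord tb h).
Proof.
  intros HB2. induction n as [|n IH]; intros h.
  - simpl. lra.
  - simpl play. eapply Rle_trans. apply IH.
    rewrite outcome_snoc, utility_app.
    assert (Hb := HB2 h).
    destruct (winner tb (A ord tb h) (p B1 h) (p B2 h)); simpl; lra.
Qed.

Lemma eq2 : forall n h,
  U B2 (outcome ord tb (play (sprof m ord) n h)) = U B2 (outcome ord tb h).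
Proof.
  induction n as [|n IH]; intros h.
  - reflexivity.
  - simpl play. rewrite IH, outcome_snoc, utility_app.
    unfold sprof, strat.
    destruct (pun _) eqn:Hp.
    + rewrite (win_pun m _ _ _ Hp). destruct (Rlt_dec 1 1); [lra|]. simpl. lra.
    + destruct (winner tb (A ord tb h) 0 0); simpl; lra.
Qed.

End S.

Lemma sumR_le (n : nat) (a : nat -> buyer) : sumR (fun j => vv (a j)) n <= INR n.
Proof. induction n; simpl sumR. simpl; lra. rewrite S_INR. destruct (a n); simpl; lra. Qed.

Lemma sumR_B1 (n : nat) : sumR (fun _ => vv B1) n = INR n.
Proof. induction n; cbn [sumR]. simpl; lra. rewrite S_INR, IHn. simpl; lra. Qed.

Theorem mainTheorem3 :
  exists c : R, 0 < c /\
  forall m : nat, (1 <= m)%nat ->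
  exists v : buyer -> R, (forall i, 0 <= v i) /\
  exists opt : R, is_OPT m v opt /\ 0 < opt /\
  forall ord : selling_order, valid_order m ord ->
  exists (tb : tie_rule) (s : profile),
    is_SPE m ord tb v s /\ eq_welfare m ord tb v s <= opt / (c * INR m).
Proof.
  exists 1. split; [lra|]. intros m Hm.
  exists vv. split. { intros []; simpl; lra. }
  exists (INR m). split.
  { split. exists (fun _ => B1). apply sumR_B1. intros a. apply sumR_le. }
  split. { apply lt_0_INR. lia. }
  intros ord _. exists (tbm m), (sprof m ord). split.
  - split.
    + intros i h. unfold sprof, strat. destruct pun; lra.
    + intros h _ Hl i s' Hs'. unfold final.
      destruct i.
      * eapply Rle_trans. apply (dev1 m ord).
        -- intros h'. reflexivity.
        -- intros h'. apply Hs'.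
        -- lia.
        -- rewrite eq1. lra. lia.
      * eapply Rle_trans. apply dev2.
        -- intros h'. apply Hs'.
        -- rewrite eq2. lra.
  - unfold eq_welfare, final. simpl length. rewrite Nat.sub_0_r.
    rewrite welf; [| simpl; lia | reflexivity].
    replace (INR m / (1 * INR m)) with 1.
    + destruct m as [|m']; [lia|]. simpl. lra.
    + field. apply not_0_INR. lia.
Qed.
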